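(* Let $d_0<d_1<\cdots$ be the increasing enumeration of $\{m\ge1:\ c_m=0\}$ and $z_n=\left(\frac{d_{4n}+1}{4}-n\right)\bmod 2$ for $n\ge0$. Then for every integer $m\ge2$ and every integer $n\in\left[2^{2m},\frac43\,2^{2m}\right]$ we have $z_n=0$.
   Context: For $n\in\mathbb{N}$ let $s_2(n)$ be the sum of the binary digits of $n$ and $t_n=s_2(n)\bmod 2$ (the Prouhet–Thue–Morse sequence). Let $F(X)=\sum_{n\ge1}t_nX^n\in\mathbb{F}_2[[X]]$ and let $G(X)=\sum_{n\ge1}c_nX^n\in\mathbb{F}_2[[X]]$ be its compositional inverse, i.e. $F(G(X))=G(F(X))=X$. The $c_n$ are identified with integers in $\{0,1\}$. The sequence $(d_n)$ is indexed from $0$, so $d_0=3$, and $\frac{d_{4n}+1}{4}$ is always an integer. *)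

(* Defs.v *)
From HB Require Import structures.
From mathcomp Require Import all_boot all_order all_algebra.
Set Implicit Arguments. Unset Strict Implicit. Unset Printing Implicit Defensive.
Import Order.TTheory GRing.Theory Num.Theory.
Local Open Scope ring_scope.

(* s_2(n): sum of binary digits of n (digit i is (n / 2^i) mod 2; digits with
   i > n vanish since 2^i > n). *)
Definition s2 (n : nat) : nat := \sum_(i < n.+1) ((n %/ 2 ^ i) %% 2).

Definition tm (n : nat) : 'F_2 := ((s2 n)%:R)%R.

Definition Ftrunc (N : nat) : {poly 'F_2} :=
  \poly_(i < N.+1) (if i == 0%N then 0%R else tm i).

Definition Gtrunc (c : nat -> 'F_2) (N : nat) : {poly 'F_2} :=
  \poly_(i < N.+1) c i.

(* c is the coefficient sequence of the compositional inverse G of F: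
   G has zero constant term and F(G(X)) = G(F(X)) = X in F_2[[X]].
   Since both series have zero constant term, the coefficient of X^N of a
   composition only depends on the truncations to degree N. *)
Definition is_comp_inverse (c : nat -> 'F_2) : Prop :=
  c 0%N = 0%R /\
  (forall N : nat, (Gtrunc c N \Po Ftrunc N)`_N = ((N == 1%N)%:R)%R) /\
  (forall N : nat, (Ftrunc N \Po Gtrunc c N)`_N = ((N == 1%N)%:R)%R).

Definition is_zero_enum (c : nat -> 'F_2) (d : nat -> nat) : Prop :=
  (forall i j : nat, (i < j)%N -> (d i < d j)%N) /\
  (forall m : nat, ((1 <= m)%N /\ c m = 0%R) <-> exists n : nat, d n = m).

Definition z (d : nat -> nat) (n : nat) : int :=
  ((Posz ((d (4 * n)%N).+1 %/ 4) - Posz n) %% 2)%Z.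

(* Main.v *)
Require Import Defs.
From HB Require Import structures.
From mathcomp Require Import all_boot all_order all_algebra.
From mathcomp Require Import ring zify.
Set Implicit Arguments. Unset Strict Implicit. Unset Printing Implicit Defensive.

Module M1.
Import GRing.Theory.
Local Open Scope ring_scope.

Notation P2 := {poly 'F_2}.

Definition cg (K : nat) (p q : P2) := exists r : P2, p = q + 'X^K * r.

Lemma cg_refl K p : cg K p p.
Proof. by exists 0; rewrite mulr0 addr0. Qed.
Lemma cg_eq K p q : p = q -> cg K p q.
Proof. by move=> ->; apply: cg_refl. Qed.
Lemma cg_sym K p q : cg K p q -> cg K q p.
Proof. by case=> r ->; exists (- r); ring. Qed.
Lemma cg_trans K p q s : cg K p q -> cg K q s -> cg K p s.
Proof. by case=> r -> [r' ->]; exists (r + r'); ring. Qed.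
Lemma cgD K p q p' q' : cg K p q -> cg K p' q' -> cg K (p + p') (q + q').
Proof. by case=> r -> [r' ->]; exists (r + r'); ring. Qed.
Lemma cgN K p q : cg K p q -> cg K (- p) (- q).
Proof. by case=> r ->; exists (- r); ring. Qed.
Lemma cgB K p q p' q' : cg K p q -> cg K p' q' -> cg K (p - p') (q - q').
Proof. by move=> h h'; apply: cgD => //; apply: cgN. Qed.
Lemma cgM K p q p' q' : cg K p q -> cg K p' q' -> cg K (p * p') (q * q').
Proof. by case=> r -> [r' ->]; exists (r * q' + q * r' + 'X^K * r * r'); ring. Qed.
Lemma cgX K p q n : cg K p q -> cg K (p ^+ n) (q ^+ n).
Proof.
move=> h; elim: n => [|n IH]; first exact: cg_refl.
by rewrite !exprS; apply: cgM.
Qed.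
Lemma cg_le K K' p q : (K' <= K)%N -> cg K p q -> cg K' p q.
Proof.
move=> le [r ->]; exists ('X^(K - K') * r).
by rewrite mulrA -exprD subnKC.
Qed.
Lemma cgXK K p q : cg K.+1 ('X * p) ('X * q) -> cg K p q.
Proof.
case=> r h; exists r.
have: 'X * (p - (q + 'X^K * r)) = 0 by rewrite mulrBr h exprS; ring.
move/eqP; rewrite mulf_eq0 polyX_eq0 /= subr_eq0 => /eqP //.
Qed.

Lemma cg_coef K (p q : P2) i : cg K p q -> (i < K)%N -> p`_i = q`_i.
Proof. by case=> r -> lt; rewrite coefD coefXnM lt addr0. Qed.

Lemma coef_cg K (p q : P2) : (forall i, (i < K)%N -> p`_i = q`_i) -> cg K p q.
Proof.
move=> h; exists (drop_poly K (p - q)).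
have e : take_poly K (p - q) = 0.
  by apply/polyP=> i; rewrite coef_take_poly coef0 coefB; case: ifP => // /h ->; rewrite subrr.
have := poly_take_drop K (p - q); rewrite e add0r mulrC => ->; ring.
Qed.

Lemma cg_cancel K (a v : P2) : cg K (a * (1 + 'X * v)) 0 -> cg K a 0.
Proof.
case=> r; rewrite add0r => h.
have [y ey] : {y : P2 | y = - ('X * v)} by eexists.
have e := subrXX 1 y K.
have hy : y ^+ K = 'X^K * ((- v) ^+ K) by rewrite ey -mulrN exprMn.
exists (r * \sum_(i < K) 1 ^+ (K.-1 - i) * y ^+ i + a * (- v) ^+ K).
have e2 : a = a * (1 ^+ K - y ^+ K) + a * y ^+ K.
  by rewrite expr1n; move: (y ^+ K) => w; ring.
have e3 : 1 - y = 1 + 'X * v by rewrite ey opprK.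
rewrite {1}e2 e hy e3 mulrA h.
move: (\sum_(i < K) 1 ^+ (K.-1 - i) * y ^+ i : P2) ('X^K : P2) ((- v) ^+ K : P2) => s x w; ring.
Qed.

Lemma two0 : (2%:R : P2) = 0.
Proof. by rewrite -polyC_natr; apply/eqP; rewrite polyC_eq0. Qed.
Lemma eq2 (a b c : P2) : a = b + 2%:R * c -> a = b.
Proof. by rewrite two0 mul0r addr0. Qed.

Lemma F2sq (x : 'F_2) : x * x = x.
Proof. by case: x => [[|[|//]]] Hx; apply/val_inj. Qed.

Lemma frob2 (p : P2) : p ^+ 2 = p \Po 'X^2.
Proof.
elim/poly_ind: p => [|p a IH]; first by rewrite comp_poly0 expr0n.
rewrite comp_polyD comp_polyM comp_polyX comp_polyC -IH.
apply: (@eq2 _ _ (p * 'X * a%:P)).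
have hA: a%:P ^+ 2 = a%:P by rewrite expr2 -polyCM F2sq.
rewrite sqrrD hA; ring.
Qed.

Lemma frob2k k (p : P2) : p ^+ (2 ^ k) = p \Po 'X^(2 ^ k).
Proof.
elim: k => [|k IH]; first by rewrite expn0 expr1 comp_polyXr.
rewrite expnS mulnC exprM IH frob2 -comp_polyA comp_Xn_poly -exprM mulnC //.
Qed.

End M1.
Import M1.

Module M2.
Import GRing.Theory.
Local Open Scope ring_scope.

Lemma s2_wide B n : (n < B)%N -> (\sum_(i < B) (n %/ 2 ^ i %% 2))%N = s2 n.
Proof.
rewrite /s2; elim: B => [//|B IH]; rewrite ltnS leq_eqVlt => /orP [/eqP <- //|lt].
rewrite big_ord_recr /= IH // divn_small ?mod0n ?addn0 //.
by apply: leq_trans lt (ltnW (ltn_expl _ _)).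
Qed.

Lemma s2_even n : s2 (2 * n) = s2 n.
Proof.
case: n => [//|n].
rewrite {1}/s2 big_ord_recl /= expn0 divn1 modnMr add0n.
rewrite -(@s2_wide (2 * n.+1)); last by lia.
by apply: eq_bigr => i _; rewrite expnS divnMA mulKn.
Qed.

Lemma s2_odd n : s2 (2 * n).+1 = (s2 n).+1.
Proof.
rewrite {1}/s2 big_ord_recl /= expn0 divn1.
have ->: ((2 * n).+1 %% 2 = 1)%N by rewrite -addn1 mulnC modnMDl.
rewrite -(@s2_wide (2 * n).+1); last by lia.
rewrite add1n; congr S; apply: eq_bigr => i _.
by rewrite expnS divnMA (_ : ((2 * n).+1 %/ 2 = n)%N); last lia.
Qed.

Lemma tm_even n : tm (2 * n) = tm n.
Proof. by rewrite /tm s2_even. Qed.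
Lemma tm_odd n : tm (2 * n).+1 = tm n + 1.
Proof. by rewrite /tm s2_odd mulrSr. Qed.
Lemma tm0 : tm 0 = 0.
Proof. by rewrite /tm /s2 big_ord_recl big_ord0. Qed.

Definition Tn N : P2 := \poly_(i < N) tm i.

Lemma TnS N : Tn N.+1 = Tn N + (tm N)%:P * 'X^N.
Proof. by rewrite /Tn !poly_def big_ord_recr /= mul_polyC. Qed.

Lemma Ftrunc_Tn K : Ftrunc K = Tn K.+1.
Proof. by apply/polyP => i; rewrite !coef_poly; case: ifP => // _; case: eqP => // ->; rewrite tm0. Qed.

Definition En N : P2 := \sum_(i < N) 'X^(2 * i).

Lemma Tn_double N : Tn (2 * N) = (1 + 'X) * (Tn N \Po 'X^2) + 'X * En N.
Proof.
elim: N => [|N IH]; first by rewrite /Tn /En big_ord0 !poly_def !big_ord0 comp_poly0; ring.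
rewrite (_ : (2 * N.+1 = (2 * N).+1.+1)%N); last by lia.
rewrite !TnS IH tm_even tm_odd /En big_ord_recr /= -/(En N).
rewrite comp_polyD comp_polyM comp_polyC comp_Xn_poly -exprM polyCD.
rewrite (exprS _ (2 * N)) polyC1.
move: (Tn N \Po 'X^2 : P2) (En N : P2) ('X^(2 * N) : P2) ((tm N)%:P : P2) => a b x t; ring.
Qed.

Lemma En_mul N : (1 - 'X^2) * En N = 1 - 'X^(2 * N).
Proof.
elim: N => [|N IH]; first by rewrite /En big_ord0 muln0 expr0; ring.
rewrite /En big_ord_recr /= mulrDr -/(En N) IH mulnS exprD.
move: ('X^(2 * N) : P2) => x; ring.
Qed.

Lemma oppF2 (p : P2) : - p = p.
Proof. by apply: (@eq2 _ _ (- p)); rewrite -[2%:R]/(1 + 1 : P2); ring. Qed.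

Definition Qt (F : P2) := (1 + 'X) ^+ 2 * F + (1 + 'X) ^+ 3 * F ^+ 2 + 'X.

Lemma Tn_cg a b K : (K <= a)%N -> (K <= b)%N -> cg K (Tn a) (Tn b).
Proof.
move=> ha hb; apply: coef_cg => i lt; rewrite /Tn !coef_poly.
by rewrite (leq_trans lt ha) (leq_trans lt hb).
Qed.

Lemma Qt_cg K F G : cg K F G -> cg K (Qt F) (Qt G).
Proof.
move=> h; rewrite /Qt; apply: cgD; last exact: cg_refl.
apply: cgD; apply: cgM; try exact: cg_refl; try exact: h; exact: cgX.
Qed.

Lemma cg_sq K (p q : P2) : cg K p q -> cg (2 * K) (p ^+ 2) (q ^+ 2).
Proof.
case=> r ->; exists (r ^+ 2); apply: (@eq2 _ _ (q * 'X^K * r)).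
rewrite mulnC exprM; move: ('X^K : P2) => x; ring.
Qed.

Lemma sqX1 : (1 + 'X : P2) ^+ 2 = 1 - 'X ^+ 2.
Proof. by apply: (@eq2 _ _ ('X + 'X ^+ 2)); ring. Qed.

Lemma Qt_Tn N : cg (2 * N) (Qt (Tn (2 * N))) 0.
Proof.
have hU := Tn_double N.
have hS : cg (2 * N) (Tn N \Po 'X^2) (Tn (2 * N) ^+ 2).
  rewrite -frob2; apply: cg_sq; apply: Tn_cg => //; lia.
have h1 : (1 + 'X) ^+ 2 * Tn (2 * N) = (1 + 'X) ^+ 3 * (Tn N \Po 'X^2) + 'X - 'X^(2 * N) * 'X.
  rewrite sqX1 {1}hU.
  have ->: (1 - 'X ^+ 2) * ((1 + 'X) * (Tn N \Po 'X^2) + 'X * En N)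
     = (1 + 'X) * (1 - 'X ^+ 2) * (Tn N \Po 'X^2) + 'X * ((1 - 'X ^+ 2) * En N) by ring.
  rewrite En_mul -sqX1; ring.
case: hS => r hr.
exists ((1 + 'X) ^+ 3 * r - 'X).
rewrite /Qt h1 hr.
apply: (@eq2 _ _ ((1 + 'X) ^+ 3 * Tn (2 * N) ^+ 2 + 'X)).
move: (Tn (2 * N) ^+ 2 : P2) ('X^(2 * N) : P2) => u x; ring.
Qed.

Lemma Qt_Ftrunc K : cg K.+1 (Qt (Ftrunc K)) 0.
Proof.
apply: (@cg_trans _ _ (Qt (Tn (2 * K.+1)))).
  apply: Qt_cg; rewrite Ftrunc_Tn; apply: Tn_cg => //; lia.
apply: (@cg_le (2 * K.+1)); first lia.
exact: Qt_Tn.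
Qed.

End M2.
Import M2.

Module M3.
Import GRing.Theory.
Local Open Scope ring_scope.

Lemma comp_polyExp (p q : P2) n : (p ^+ n) \Po q = (p \Po q) ^+ n.
Proof.
elim: n => [|n IH]; first by rewrite !expr0 comp_polyC.
by rewrite !exprS comp_polyM IH.
Qed.

Lemma comp_cgl K (p p' q : P2) : cg K p p' -> cg 1 q 0 -> cg K (p \Po q) (p' \Po q).
Proof.
case=> r -> [s]; rewrite add0r expr1 => ->.
exists (s ^+ K * (r \Po 'X * s)).
by rewrite comp_polyD comp_polyM comp_Xn_poly exprMn mulrA.
Qed.

Lemma comp_cgr K (p q q' : P2) : cg K q q' -> cg K (p \Po q) (p \Po q').
Proof.
move=> h; elim/poly_ind: p => [|p a IH]; first by rewrite !comp_poly0; apply: cg_refl.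
rewrite !comp_polyD !comp_polyM !comp_polyX !comp_polyC.
by apply: cgD; [apply: cgM|apply: cg_refl].
Qed.

Lemma comp_cg K (p p' q q' : P2) : cg K p p' -> cg K q q' -> cg 1 q 0 ->
  cg K (p \Po q) (p' \Po q').
Proof.
move=> hp hq h0; apply: cg_trans (comp_cgl hp h0) _; exact: comp_cgr.
Qed.

Lemma Gtrunc_cg c a b K : (K <= a.+1)%N -> (K <= b.+1)%N -> cg K (Gtrunc c a) (Gtrunc c b).
Proof.
move=> ha hb; apply: coef_cg => i lt; rewrite /Gtrunc !coef_poly.
by rewrite (leq_trans lt ha) (leq_trans lt hb).
Qed.

Lemma Gtrunc0 c a : c 0%N = 0 -> cg 1 (Gtrunc c a) 0.
Proof.
move=> h; apply: coef_cg => i; rewrite ltnS leqn0 => /eqP ->.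
by rewrite /Gtrunc coef_poly /= h coef0.
Qed.

Lemma FG_X c K : c 0%N = 0 ->
  (forall N : nat, (Ftrunc N \Po Gtrunc c N)`_N = ((N == 1%N)%:R)) ->
  cg K.+1 (Ftrunc K \Po Gtrunc c K) 'X.
Proof.
move=> h0 h; apply: coef_cg => i lt.
rewrite coefX -h; apply: (@cg_coef i.+1) => //.
apply: comp_cg; last exact: Gtrunc0.
  rewrite !Ftrunc_Tn; apply: Tn_cg => //; lia.
apply: Gtrunc_cg => //; lia.
Qed.

Definition Eq (G W : P2) := (1 + G) ^+ 2 * W + (1 + G) ^+ 3 * W ^+ 2 + G.
Definition E G := Eq G 'X.

Lemma Eq_cg K G W W' : cg K W W' -> cg K (Eq G W) (Eq G W').
Proof.
move=> h; rewrite /Eq; apply: cgD; last exact: cg_refl.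
apply: cgD; apply: cgM; try exact: cg_refl; try exact: h; exact: cgX.
Qed.

Lemma E_Gtrunc c K : is_comp_inverse c -> cg K.+1 (E (Gtrunc c K)) 0.
Proof.
case=> h0 [_ h].
set G := Gtrunc c K.
have e : Qt (Ftrunc K) \Po G = Eq G (Ftrunc K \Po G).
  rewrite /Qt /Eq !comp_polyD !comp_polyM !comp_polyD !comp_polyX !comp_polyC polyC1.
  move: (Ftrunc K \Po G : P2) => w; ring.
have h1 : cg K.+1 (Qt (Ftrunc K) \Po G) 0.
  rewrite -(comp_poly0 G); apply: comp_cgl; [exact: Qt_Ftrunc|exact: Gtrunc0].
rewrite e in h1; apply: cg_trans h1; apply: cg_sym; apply: Eq_cg; exact: FG_X.
Qed.

End M3.
Import M3.

Module M4.
Import GRing.Theory.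
Local Open Scope ring_scope.

Lemma E_unique K (G1 G2 : P2) : cg K (E G1) 0 -> cg K (E G2) 0 -> cg K G1 G2.
Proof.
move=> h1 h2.
have h := cgB h1 h2; rewrite subr0 in h.
have e : E G1 - E G2 = (G1 - G2) * (1 + 'X * ((2%:R + G1 + G2)
   + 'X * ((1 + G1) ^+ 2 + (1 + G1) * (1 + G2) + (1 + G2) ^+ 2))).
  rewrite /E /Eq; ring.
rewrite e in h; have := cg_cancel h.
by case=> r; rewrite add0r => hr; exists r; rewrite -hr; ring.
Qed.

Definition M J : P2 := \prod_(j < J) (1 + 'X^(4 ^ j)).

Lemma M_next J : M J.+1 = M J * (1 + 'X^(4 ^ J)).
Proof. by rewrite /M big_ord_recr. Qed.

Lemma M_rec J : M J.+1 = (1 + 'X) * (M J \Po 'X^4).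
Proof.
elim: J => [|J IH].
  by rewrite M_next /M big_ord0 comp_polyC expn0 expr1 polyC1; ring.
rewrite {1}M_next [in RHS]M_next IH comp_polyM comp_polyD comp_polyC comp_Xn_poly -exprM.
by rewrite (expnS 4 J) polyC1 mulnC mulrA.
Qed.

Lemma M_cg J : cg (4 ^ J) (M J) ((1 + 'X) * M J ^+ 4).
Proof.
have -> : (1 + 'X) * M J ^+ 4 = M J.+1 by rewrite M_rec -(frob2k 2).
exists (- M J); rewrite M_next; ring.
Qed.

Lemma M_cg1 J : cg 1 (M J) 1.
Proof.
elim: J => [|J IH]; first by rewrite /M big_ord0; apply: cg_refl.
rewrite M_next -[1]mulr1; apply: cgM => //.
exists ('X^((4 ^ J).-1)); rewrite expr1 -exprS prednK ?expn_gt0 ?mulr1 //.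
Qed.

Lemma M3 J : cg (4 ^ J) ((1 + 'X) * M J ^+ 3) 1.
Proof.
have h := M_cg J.
have h2 : cg (4 ^ J) (M J * (1 - (1 + 'X) * M J ^+ 3)) 0.
  case: h => r hr; exists r.
  have ->: M J * (1 - (1 + 'X) * M J ^+ 3) = M J - (1 + 'X) * M J ^+ 4 by ring.
  rewrite {1}hr; move: ('X^(4 ^ J) : P2) => x; ring.
case: (M_cg1 J) => s; rewrite expr1 => hs.
rewrite mulrC {2}hs in h2; have := cg_cancel h2.
case=> r; rewrite add0r => hr; exists (- r); move: hr.
move: ('X^(4 ^ J) : P2) ((1 + 'X) * M J ^+ 3 : P2) => x a hr.
have ->: a = 1 - (1 - a) by ring.
rewrite hr; ring.
Qed.

Definition Qp J : P2 := (1 + 'X^2) * (M J \Po 'X^8).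
Definition Aq J : P2 := (1 + 'X + 'X^2 + 'X^3) * (Qp J \Po 'X^4).
Definition Gx J : P2 := drop_poly 1 (Aq J - 1 - 'X).

Lemma Aq_eq J : Aq J = (1 + 'X) ^+ 11 * M J ^+ 32.
Proof.
rewrite /Aq /Qp comp_polyM comp_polyD comp_polyC polyC1 comp_Xn_poly -exprM -comp_polyA.
rewrite comp_Xn_poly -exprM.
have e1 : (1 + 'X + 'X^2 + 'X^3 : P2) = (1 + 'X) ^+ 3.
  by apply: (@eq2 _ _ (- ('X + 'X^2))); ring.
have e2 : (1 + 'X^(2 * 4) : P2) = (1 + 'X) ^+ 8.
  have := frob2k 3 (1 + 'X); rewrite comp_polyD comp_polyC comp_polyX polyC1 => h.
  exact: (esym h).
have e3 : M J \Po 'X^(8 * 4) = M J ^+ 32 by exact: (esym (frob2k 5 (M J))).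
rewrite e1 e2 e3; ring.
Qed.

Lemma Aq_cg J : cg (4 ^ J) (Aq J) ((1 + 'X) * M J ^+ 2).
Proof.
have h := M_cg J.
have h2 : cg (4 ^ J) (M J ^+ 2) ((1 + 'X) ^+ 2 * M J ^+ 8).
  by apply: cg_trans (cgX 2 h) _; apply: cg_eq; ring.
have h8 : cg (4 ^ J) (M J ^+ 8) ((1 + 'X) ^+ 8 * M J ^+ 32).
  by apply: cg_trans (cgX 8 h) _; apply: cg_eq; ring.
rewrite Aq_eq; apply: cg_sym.
apply: cg_trans (cgM (cg_refl _ (1 + 'X)) h2) _.
apply: (@cg_trans _ _ ((1 + 'X) ^+ 3 * M J ^+ 8)); first by apply: cg_eq; ring.
apply: cg_trans (cgM (cg_refl _ ((1 + 'X) ^+ 3)) h8) _.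
by apply: cg_eq; ring.
Qed.

Lemma Aq3 J : cg (4 ^ J) (Aq J ^+ 3) (1 + 'X).
Proof.
apply: cg_trans (cgX 3 (Aq_cg J)) _.
have e : ((1 + 'X) * M J ^+ 2) ^+ 3 = (1 + 'X) * ((1 + 'X) * M J ^+ 3) ^+ 2 by ring.
rewrite e; apply: (@cg_trans _ _ ((1 + 'X) * 1 ^+ 2)); last by apply: cg_eq; ring.
by apply: cgM; [apply: cg_refl|apply: cgX; apply: M3].
Qed.

End M4.
Import M4.

Module M5.
Import GRing.Theory.
Local Open Scope ring_scope.

Fixpoint mdbf (J y : nat) : bool :=
  if J is J'.+1 then ((y %% 4 <= 1) && mdbf J' (y %/ 4))%N else (y == 0)%N.

Lemma mdbf0 J : mdbf J 0.
Proof. by elim: J. Qed.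

Lemma coefXp (p : P2) i : ((1 + 'X) * p)`_i = p`_i + (if i == 0%N then 0 else p`_i.-1).
Proof. by rewrite mulrDl mul1r coefD coefXM. Qed.

Lemma md4 q r : (r < 4)%N -> ((q * 4 + r) %% 4 = r)%N.
Proof. by move=> h; rewrite modnMDl modn_small. Qed.
Lemma dv4 q r : (r < 4)%N -> ((q * 4 + r) %/ 4 = q)%N.
Proof. by move=> h; rewrite divnMDl // divn_small ?addn0. Qed.

Lemma coef_M J y : (M J)`_y = (mdbf J y)%:R.
Proof.
elim: J y => [|J IH] y.
  by rewrite /M big_ord0 coef1 /=.
rewrite M_rec coefXp !coef_comp_poly_Xn // !IH /=.
have [q [r [-> hr]]] : exists q r, y = (q * 4 + r)%N /\ (r < 4)%N.
  by exists (y %/ 4)%N, (y %% 4)%N; rewrite -divn_eq ltn_mod.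
rewrite /dvdn md4 // dv4 //.
case: r hr => [|[|[|[|r]]]] // _.
- case: q => [|q]; first by rewrite /= addr0.
  rewrite (_ : ((q.+1 * 4 + 0).-1 = q * 4 + 3)%N); last by rewrite mulSn; lia.
  by rewrite md4 // addr0.
- rewrite (_ : ((q * 4 + 1).-1 = q * 4 + 0)%N); last by lia.
  by rewrite md4 // dv4 // add0r addn1.
- rewrite (_ : ((q * 4 + 2).-1 = q * 4 + 1)%N); last by lia.
  by rewrite md4 // addn2 addr0.
- rewrite (_ : ((q * 4 + 3).-1 = q * 4 + 2)%N); last by lia.
  by rewrite md4 // addn3 addr0.
Qed.

Lemma mdd d q r : (r < d)%N -> ((q * d + r) %% d = r)%N.
Proof. by move=> h; rewrite modnMDl modn_small. Qed.
Lemma dvd' d q r : (r < d)%N -> ((q * d + r) %/ d = q)%N.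
Proof. by move=> h; rewrite divnMDl ?divn_small ?addn0 //; apply: leq_ltn_trans h. Qed.

Definition qb J k := (((k %% 8 == 0) || (k %% 8 == 2)) && mdbf J (k %/ 8))%N.

Lemma coef_Qp J k : (Qp J)`_k = (qb J k)%:R.
Proof.
rewrite /Qp mulrDl mul1r coefD coefXnM !coef_comp_poly_Xn // !coef_M.
have [q [r [-> hr]]] : exists q r, k = (q * 8 + r)%N /\ (r < 8)%N.
  by exists (k %/ 8)%N, (k %% 8)%N; rewrite -divn_eq ltn_mod.
rewrite /qb /dvdn mdd // dvd' //.
case: r hr => [|[|[|[|[|[|[|[|r]]]]]]]] // _.
- case: q => [|q]; first by rewrite /= addr0.
  rewrite (_ : (q.+1 * 8 + 0 < 2)%N = false); last by lia.
  rewrite (_ : ((q.+1 * 8 + 0) - 2 = q * 8 + 6)%N); last by rewrite mulSn; lia.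
  by rewrite mdd // addr0.
- case: q => [|q]; first by rewrite /= addr0.
  rewrite (_ : (q.+1 * 8 + 1 < 2)%N = false); last by lia.
  rewrite (_ : ((q.+1 * 8 + 1) - 2 = q * 8 + 7)%N); last by rewrite mulSn; lia.
  by rewrite mdd // addr0.
- rewrite (_ : (q * 8 + 2 < 2)%N = false); last by lia.
  rewrite (_ : ((q * 8 + 2) - 2 = q * 8 + 0)%N); last by lia.
  by rewrite mdd // dvd' // add0r.
all: rewrite (_ : (q * 8 + _ < 2)%N = false); try lia.
- by rewrite (_ : ((q * 8 + 3) - 2 = q * 8 + 1)%N) ?mdd ?addr0 //; lia.
- by rewrite (_ : ((q * 8 + 4) - 2 = q * 8 + 2)%N) ?mdd ?addr0 //; lia.
- by rewrite (_ : ((q * 8 + 5) - 2 = q * 8 + 3)%N) ?mdd ?addr0 //; lia.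
- by rewrite (_ : ((q * 8 + 6) - 2 = q * 8 + 4)%N) ?mdd ?addr0 //; lia.
- by rewrite (_ : ((q * 8 + 7) - 2 = q * 8 + 5)%N) ?mdd ?addr0 //; lia.
Qed.

Lemma coef_Aq J i : (Aq J)`_i = (Qp J)`_(i %/ 4).
Proof.
have e : (1 + 'X + 'X^2 + 'X^3 : P2) = 1 + 'X + 'X^2 + 'X^3 by [].
rewrite /Aq !mulrDl mul1r !coefD coefXM !coefXnM !coef_comp_poly_Xn //.
have [q [r [-> hr]]] : exists q r, i = (q * 4 + r)%N /\ (r < 4)%N.
  by exists (i %/ 4)%N, (i %% 4)%N; rewrite -divn_eq ltn_mod.
rewrite /dvdn mdd // dvd' //.
case: r hr => [|[|[|[|r]]]] // _.
- case: q => [|q]; first by rewrite /= !addr0.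
  rewrite (_ : (q.+1 * 4 + 0 < 2)%N = false); last by lia.
  rewrite (_ : (q.+1 * 4 + 0 < 3)%N = false); last by lia.
  rewrite (_ : ((q.+1 * 4 + 0) - 2 = q * 4 + 2)%N); last by rewrite mulSn; lia.
  rewrite (_ : ((q.+1 * 4 + 0) - 3 = q * 4 + 1)%N); last by rewrite mulSn; lia.
  rewrite (_ : ((q.+1 * 4 + 0).-1 = q * 4 + 3)%N); last by rewrite mulSn; lia.
  by rewrite !mdd // !dvd' //= ?addr0 ?add0r ?addr0 ?add0r.
- case: q => [|q]; first by rewrite /= ?div0n ?addr0 ?add0r ?addr0 ?add0r.
  rewrite (_ : (q.+1 * 4 + 1 < 2)%N = false); last by lia.
  rewrite (_ : (q.+1 * 4 + 1 < 3)%N = false); last by lia.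
  rewrite (_ : ((q.+1 * 4 + 1) - 2 = q * 4 + 3)%N); last by rewrite mulSn; lia.
  rewrite (_ : ((q.+1 * 4 + 1) - 3 = q * 4 + 2)%N); last by rewrite mulSn; lia.
  rewrite (_ : ((q.+1 * 4 + 1).-1 = q.+1 * 4 + 0)%N); last by lia.
  by rewrite !mdd // !dvd' //= ?addr0 ?add0r ?addr0 ?add0r.
- case: q => [|q]; first by rewrite /= ?div0n ?addr0 ?add0r ?addr0 ?add0r.
  rewrite (_ : (q.+1 * 4 + 2 < 2)%N = false); last by lia.
  rewrite (_ : (q.+1 * 4 + 2 < 3)%N = false); last by lia.
  rewrite (_ : ((q.+1 * 4 + 2) - 2 = q.+1 * 4 + 0)%N); last by lia.
  rewrite (_ : ((q.+1 * 4 + 2) - 3 = q * 4 + 3)%N); last by rewrite mulSn; lia.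
  rewrite (_ : ((q.+1 * 4 + 2).-1 = q.+1 * 4 + 1)%N); last by lia.
  by rewrite !mdd // !dvd' //= ?addr0 ?add0r ?addr0 ?add0r.
- rewrite (_ : (q * 4 + 3 < 2)%N = false); last by lia.
  rewrite (_ : (q * 4 + 3 < 3)%N = false); last by lia.
  rewrite (_ : ((q * 4 + 3) - 2 = q * 4 + 1)%N); last by lia.
  rewrite (_ : ((q * 4 + 3) - 3 = q * 4 + 0)%N); last by lia.
  rewrite (_ : ((q * 4 + 3).-1 = q * 4 + 2)%N); last by lia.
  by rewrite !mdd // !dvd' //= ?addr0 ?add0r ?addr0 ?add0r; case: ifP; rewrite add0r.
Qed.

End M5.
Import M5.

Module M6.
Import GRing.Theory.
Local Open Scope ring_scope.

Lemma Aq0 J : (Aq J)`_0 = 1.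
Proof. by rewrite coef_Aq coef_Qp /qb /= mdbf0. Qed.

Lemma XGx J : 'X * Gx J = Aq J - 1 - 'X.
Proof.
have := poly_take_drop 1 (Aq J - 1 - 'X).
have -> : take_poly 1 (Aq J - 1 - 'X) = 0.
  apply/polyP => i; rewrite coef_take_poly coef0; case: i => [|i] //=.
  by rewrite !coefB Aq0 coef1 coefX /= subrr subr0.
by rewrite add0r expr1 mulrC => ->.
Qed.

Lemma coef_Gx J n : (Gx J)`_n = (qb J (n.+1 %/ 4))%:R - (n == 0%N)%:R.
Proof.
rewrite /Gx coef_drop_poly !coefB coef_Aq coef_Qp coef1 coefX addn1 /=.
by rewrite subr0.
Qed.

Lemma E_Gx J : cg (4 ^ J).-1 (E (Gx J)) 0.
Proof.
apply: cgXK; rewrite prednK ?expn_gt0 // mulr0.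
have e0 : 'X * E (Gx J) = ('X + 'X * Gx J) ^+ 2 + ('X + 'X * Gx J) ^+ 3 + 'X * Gx J.
  by rewrite /E /Eq; ring.
rewrite XGx in e0.
have e1 : 'X * E (Gx J) = Aq J ^+ 3 + (1 + 'X).
  rewrite e0; apply: (@eq2 _ _ (- Aq J ^+ 2 + Aq J - 1 - 'X)).
  move: (Aq J : P2) => a; ring.
rewrite e1; apply: (@cg_trans _ _ ((1 + 'X) + (1 + 'X))).
  by apply: cgD; [apply: Aq3|apply: cg_refl].
by apply: cg_eq; rewrite -mulr2n -mulr_natl two0 mul0r.
Qed.

Lemma c_char c J n : is_comp_inverse c -> (n.+1 < 4 ^ J)%N ->
  c n = (qb J (n.+1 %/ 4))%:R - (n == 0%N)%:R.
Proof.
move=> hc hn.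
have h1 := E_Gtrunc (4 ^ J).-2 hc.
have e : ((4 ^ J).-2.+1 = (4 ^ J).-1)%N by lia.
rewrite e in h1.
have h2 := @cg_coef _ _ _ n (E_unique h1 (E_Gx J)).
rewrite -coef_Gx -h2; last by lia.
rewrite /Gtrunc coef_poly; case: ifP => //; lia.
Qed.

End M6.
Import M6.

Module M7.

Open Scope nat_scope.

Lemma sum_blocks d N (f : nat -> nat) :
  \sum_(0 <= k < N * d) f k = \sum_(0 <= q < N) \sum_(0 <= r < d) f (q * d + r).
Proof.
elim: N => [|N IH]; first by rewrite mul0n !big_geq.
rewrite big_nat_recr //= -IH mulSnr.
rewrite [LHS](@big_cat_nat _ _ _ (N * d)) ?leq_addr //=.
congr (_ + _).
rewrite -{1}(add0n (N * d)) big_addn (addKn (N * d)); apply: eq_bigr => r _; by rewrite addnC.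
Qed.

Lemma mdbf_bound J y : mdbf J y -> 3 * y < 4 ^ J.
Proof.
elim: J y => [|J IH] y /=; first by move/eqP ->.
case/andP => h1 /IH h2; have := divn_eq y 4; rewrite expnS; lia.
Qed.

Lemma mdbf_stab J y : y < 4 ^ J -> mdbf J.+1 y = mdbf J y.
Proof.
elim: J y => [|J IH] y; first by rewrite expn0 ltnS leqn0 => /eqP ->.
move=> hy.
have e : mdbf J.+2 y = (y %% 4 <= 1) && mdbf J.+1 (y %/ 4) by [].
rewrite e IH //.
by rewrite ltn_divLR // -expnSr.
Qed.

Lemma mdbf_stabk J k y : y < 4 ^ J -> mdbf (k + J) y = mdbf J y.
Proof.
move=> hy; elim: k => [//|k IH]; rewrite addSn mdbf_stab // .
by apply: leq_trans hy _; rewrite leq_exp2l // leq_addl.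
Qed.

Lemma mdbf_count J : \sum_(0 <= y < 4 ^ J) mdbf J y = 2 ^ J.
Proof.
elim: J => [|J IH]; first by rewrite big_nat1.
rewrite expnSr sum_blocks expnS -IH big_distrr /=; apply: eq_bigr => q _.
rewrite big_mkord !big_ord_recr big_ord0 /= !mdd // !dvd' //=.
by case: (mdbf J q).
Qed.

Lemma qb_count j : \sum_(0 <= k < 4 ^ j * 8) qb (j + 3) k = 2 ^ j.+1.
Proof.
rewrite sum_blocks expnS -mdbf_count big_distrr /=.
rewrite !big_nat; apply: eq_bigr => q /andP [_ hq].
rewrite big_mkord !big_ord_recr big_ord0 /= /qb !mdd // !dvd' //=.
rewrite (addnC j 3) mdbf_stabk //.
by case: (mdbf j q).
Qed.

Lemma qb_bound J j k : qb J k -> k %/ 8 < 4 ^ j -> j <= J -> 3 * k < 8 * 4 ^ j.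
Proof.
rewrite /qb => /andP [h1 h2] hk hj.
have : mdbf j (k %/ 8).
  by rewrite -(mdbf_stabk (J - j)) // subnK.
move/mdbf_bound => h3; have := divn_eq k 8.
case/orP: h1 => /eqP h1; rewrite h1; lia.
Qed.

End M7.
Import M7.

Module M8.

Open Scope nat_scope.

Definition zs (c : nat -> 'F_2) s := (1 <= s) && (c s == 0%R).

Section Enum.
Variables (c : nat -> 'F_2) (d : nat -> nat).
Hypothesis hd : is_zero_enum c d.

Lemma zsP s : zs c s <-> exists i, d i = s.
Proof.
case: hd => _ h; rewrite -h /zs; split; first by case/andP => -> /eqP.
by case=> -> ->.
Qed.

Lemma d_inv i j : d j < d i -> j < i.
Proof.
case: hd => h _ => lt; rewrite ltnNge; apply/negP; rewrite leq_eqVlt.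
case/orP => [/eqP e|/h]; [by move: lt; rewrite e ltnn|lia].
Qed.

Lemma d_mono i j : i <= j -> d i <= d j.
Proof.
case: hd => h _; rewrite leq_eqVlt; case/orP => [/eqP -> //|/h]; lia.
Qed.

Lemma enum_count i : \sum_(0 <= s < d i) zs c s = i.
Proof.
elim: i => [|i IH].
  rewrite big_nat_cond big1 // => s /andP [/andP [_ hs] _].
  apply/eqP; rewrite eqb0; apply/negP => /zsP [j ej].
  by rewrite -ej in hs; have := d_inv hs.
rewrite (@big_cat_nat _ _ _ (d i)) //= ?d_mono // IH.
have hi : d i < d i.+1 by case: hd => h _; apply: h.
rewrite big_ltn // big_nat_cond big1.
  have : zs c (d i) by apply/zsP; exists i.
  by move=> ->; lia.
move=> s /andP [/andP [h1 h2] _]; apply/eqP; rewrite eqb0; apply/negP => /zsP [j ej].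
rewrite -ej in h1 h2; have := d_inv h2; have := d_inv h1; lia.
Qed.

Lemma enum_at x n : zs c x -> \sum_(0 <= s < x) zs c s = n -> d n = x.
Proof.
case/zsP => i <-; rewrite enum_count => ->; done.
Qed.
End Enum.

Lemma Zblock (c : nat -> 'F_2) J K :
  (forall s, 1 <= s -> s.+1 < 4 ^ J -> (c s == 0%R) = ~~ qb J (s.+1 %/ 4)) ->
  qb J 0 -> 4 * K + 4 < 4 ^ J ->
  \sum_(0 <= s < 4 * K + 3) zs c s = 4 * \sum_(1 <= k < K.+1) ~~ qb J k.
Proof.
move=> hc h0; elim: K => [|K IH] hK.
  rewrite (big_geq (m:=1)) // muln0 big_mkord !big_ord_recr big_ord0 /= /zs /=.
  rewrite hc ?hc; try lia. by rewrite (_ : 2 %/ 4 = 0) // (_ : 3 %/ 4 = 0) // h0.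
rewrite [in RHS]big_nat_recr //= mulnDr -IH; last by lia.
rewrite (_ : 4 * K.+1 + 3 = (4 * K + 3) + 4); last by lia.
rewrite (@big_cat_nat _ _ _ (4 * K + 3)) ?leq_addr //=; congr (_ + _).
rewrite -{1}(add0n (4 * K + 3)) big_addn addKn big_mkord !big_ord_recr big_ord0 /= /zs.
rewrite !hc; try lia.
rewrite (_ : (0 + (4 * K + 3)).+1 %/ 4 = K.+1); last by lia.
rewrite (_ : (1 + (4 * K + 3)).+1 %/ 4 = K.+1); last by lia.
rewrite (_ : (2 + (4 * K + 3)).+1 %/ 4 = K.+1); last by lia.
rewrite (_ : (3 + (4 * K + 3)).+1 %/ 4 = K.+1); last by lia.
rewrite (_ : 1 <= 0 + (4 * K + 3)); last by lia.
rewrite (_ : 1 <= 1 + (4 * K + 3)); last by lia.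
rewrite (_ : 1 <= 2 + (4 * K + 3)); last by lia.
rewrite (_ : 1 <= 3 + (4 * K + 3)); last by lia.
by case: (qb J K.+1).
Qed.

End M8.
Import M8.

Lemma F2nat0 (b : bool) : ((b%:R)%R == 0%R :> 'F_2) = ~~ b.
Proof. by case: b. Qed.

Lemma sum_compl a b (f : nat -> bool) : a <= b ->
  (\sum_(a <= k < b) f k + \sum_(a <= k < b) ~~ f k = b - a)%N.
Proof.
move=> h; rewrite -big_split /= (eq_bigr (fun _ => 1%N)); last by move=> i _; case: (f i).
by rewrite sum_nat_const_nat muln1.
Qed.

Theorem mainTheorem12 (c : nat -> 'F_2) (d : nat -> nat) :
  is_comp_inverse c -> is_zero_enum c d ->
  forall m n : nat, (2 <= m)%N ->
    (2 ^ (2 * m) <= n)%N -> (3 * n <= 4 * 2 ^ (2 * m))%N ->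
    z d n = 0%R.
Proof.
move=> hc hd m n hm hn1 hn2.
case: m hm hn1 hn2 => [//|j] hm hn1 hn2.
set J := (j + 3)%N.
set P := (4 ^ j)%N.
have e1 : (2 ^ (2 * j.+1) = 4 * P)%N by rewrite expnM expnS.
have e2 : (2 ^ j.+1 = 2 * 2 ^ j)%N by rewrite expnS.
have e3 : (2 ^ j <= P)%N by rewrite /P leq_exp2r.
have e4 : (4 ^ J = 64 * P)%N by rewrite /J expnD mulnC.
rewrite e1 in hn1 hn2.
have hchar : forall s, (1 <= s)%N -> (s.+1 < 4 ^ J)%N ->
    (c s == 0%R) = ~~ qb J (s.+1 %/ 4).
  move=> s hs hs'; rewrite (c_char hc hs') (_ : (s == 0%N) = false); last by lia.
  by rewrite GRing.subr0 F2nat0.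
have h0 : qb J 0 by rewrite /qb /= mdbf0.
have nqb : forall k, (4 * P < k)%N -> (k < 8 * P)%N -> qb J k = false.
  move=> k h1 h2; apply/negP => hq.
  have hq8 : (k %/ 8 < 4 ^ j)%N by rewrite ltn_divLR // -/P; lia.
  have := @qb_bound J j k hq hq8 (leq_addr _ _); rewrite -/P; lia.
set K := (n + 2 ^ j.+1)%N.
have hK1 : (4 * P < K)%N by rewrite /K; lia.
have hK2 : (K < 8 * P)%N by rewrite /K; lia.
have hc8 := qb_count j; rewrite -/J -/P in hc8.
have hS1 : (\sum_(0 <= k < K) qb J k = 2 ^ j.+1)%N.
  have ht : (\sum_(K <= k < P * 8) qb J k = 0)%N.
    rewrite big_nat_cond big1 // => k /andP [/andP [hk1 hk2] _].
    by rewrite nqb //; lia.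
  by rewrite -hc8 (@big_cat_nat _ _ _ K 0 (P * 8)) //= ?ht ?addn0 //; lia.
have hS : (\sum_(1 <= k < K) ~~ qb J k = n)%N.
  have := sum_compl (fun k => qb J k) (_ : 1 <= K)%N; rewrite /=.
  move: hS1; rewrite big_ltn ?h0 /=; lia.
have eK : K = (K.-1).+1 by lia.
have hK4 : (4 * K.-1 + 4 < 4 ^ J)%N by lia.
have hZ := @Zblock c J K.-1 hchar h0 hK4.
rewrite -eK hS in hZ.
have hx : zs c (4 * K.-1 + 3).
  rewrite /zs hchar; try lia.
  rewrite (_ : ((4 * K.-1 + 3).+1 %/ 4 = K)%N); last by lia.
  by rewrite nqb // andbT; lia.
have hd4 := enum_at hd hx hZ.
rewrite /z hd4 (_ : ((4 * K.-1 + 3).+1 %/ 4 = K)%N); last by lia.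
rewrite /K PoszD GRing.addrAC GRing.subrr GRing.add0r modz_nat.
by rewrite expnS modnMr.
Qed.
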